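(* Let $G=\langle\Sigma_\tau,Q,\rightarrow,Q^0\rangle$ be a nondeterministic automaton with secret states $Q^S\subseteq Q$, and assume $UR(Q^0)\not\subseteq Q^S$. Let $\sim_o$ be an opaque observation equivalence on $G$ and $\tilde G$ the quotient of $G$ modulo $\sim_o$ (with secret states $\{[x]\mid x\in Q^S\}$). Let $H_{ob}$ be the quotient of $det(\tilde G)$ modulo some opaque bisimulation $\approx_o$, and $H_b$ the quotient of $det(\tilde G)$ modulo some bisimulation equivalence $\approx$. Let $H_{obd}$ be the desired observer of $H_{ob}$, i.e., $H_{ob}$ with every class $[X]$ satisfying $X\subseteq\tilde Q^S$ deleted and only the reachable part kept. Let $T=TPO(det_d(G),det(G))$ and $T'=TPO(H_{obd},H_b)$ be the corresponding largest three-player observers. Then for every finite sequence $\omega$ of labels, $\omega$ labels a path starting at the initial state of $T$ if and only if $\omega$ labels a path starting at the initial state of $T'$.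
   Context: Automata: a (nondeterministic) automaton $G=\langle \Sigma_\tau,Q,\rightarrow,Q^0\rangle$ has finite observable alphabet $\Sigma$, special unobservable symbol $\tau\notin\Sigma$, $\Sigma_\tau=\Sigma\cup\{\tau\}$, transition relation $\rightarrow\subseteq Q\times\Sigma_\tau\times Q$ and initial states $Q^0$. Deterministic: one initial state, no $\tau$-transitions, functional transitions. $p\overset{s}{\Rightarrow}q$ ($s\in\Sigma^*$) means a path from $p$ to $q$ whose labels, with $\tau$'s deleted, spell $s$. $UR(B)=\{q\mid b\overset{\varepsilon}{\Rightarrow}q,\ b\in B\}$. The observer $det(G)$ is the deterministic automaton over $\Sigma$ with initial state $UR(Q^0)$ and $X\xrightarrow{\sigma}Y$ iff $Y=UR(\{y\mid x\xrightarrow{\sigma}y,\ x\in X\})\neq\emptyset$, restricted to reachable states. Given secret states $Q^S$, the desired observer $det_d(G)$ is $det(G)$ with all states $X\subseteq Q^S$ deleted and only the part reachable from the initial state kept. Quotient modulo an equivalence $\sim$: states are classes $[x]$, $[x]\xrightarrow{\sigma}[y]$ iff $x'\xrightarrow{\sigma}y'$ for some $x'\in[x],y'\in[y]$, initial states are classes of initial states. A bisimulation on an automaton is an equivalence $\approx$ such that $x_1\approx x_2$ and $x_1\xrightarrow{\sigma}y_1$ imply $x_2\xrightarrow{\sigma}y_2$ for some $y_2\approx y_1$. An opaque observation equivalence on $G$ is an equivalence $\sim_o$ on $Q$ such that $x_1\sim_o x_2$ implies (i) whenever $x_1\overset{s}{\Rightarrow}y_1$ ($s\in\Sigma^*$)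 there is $y_2\sim_o y_1$ with $x_2\overset{s}{\Rightarrow}y_2$, and (ii) $x_1\in Q^S\iff x_2\in Q^S$. An opaque bisimulation on $det(G)$ is an equivalence $\approx_o$ on its states such that $X_1\approx_o X_2$ implies (i) whenever $X_1\xrightarrow{s}Y_1$ there is $Y_2\approx_o Y_1$ with $X_2\xrightarrow{s}Y_2$, and (ii) $X_1\subseteq Q^S\iff X_2\subseteq Q^S$. Largest three-player observer: let $D=\langle\Sigma,X_D,\rightarrow_D,d_0\rangle$ and $F=\langle\Sigma,X_F,\rightarrow_F,f_0\rangle$ be deterministic automata. Let $\epsilon$ be a fresh symbol and $\Sigma^r=\{\sigma\to\epsilon\mid\sigma\in\Sigma\}$ a set of fresh ''erasure'' symbols. $TPO(D,F)$ is the labeled transition system whose states are of three types: $Y$-states $(d,f)\in X_D\times X_F$; $Z$-states $Z((d,f),e)$ with $e\in\Sigma$; $W$-states $W((d,f),a)$ with $a\in\Sigma\cup\Sigma^r$. Its initial state is the $Y$-state $(d_0,f_0)$, its states are those reachable from it, and its transitions are exactly: (1) $(d,f)\xrightarrow{e}Z((d,f),e)$ whenever $e$ is defined at $f$ in $F$; (2) $Z((d,f),e)\xrightarrow{\theta}Z((d',f),e)$ for $\theta\in\Sigma$ whenever $d\xrightarrow{\theta}_D d'$; (3) $Z((d,f),e)\xrightarrow{\epsilon}W((d,f),e)$ whenever $e$ is defined at $d$ in $D$ and at $f$ in $F$; (4) $Z((d,f),e)\xrightarrow{e\to\epsilon}W((d,f),e\to\epsilon)$ whenever $e$ is defined at $f$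 in $F$; (5) $W((d,f),e)\xrightarrow{e}(d',f')$ where $d\xrightarrow{e}_Dd'$ and $f\xrightarrow{e}_Ff'$; (6) $W((d,f),e\to\epsilon)\xrightarrow{e}(d,f')$ where $f\xrightarrow{e}_Ff'$. (The initial states of $D$ must exist, i.e., $D$ is nonempty.) *)

(* Defs.v *)
From mathcomp Require Import all_boot.
Set Implicit Arguments.
Unset Strict Implicit.
Unset Printing Implicit Defensive.

(* Only transitions between states of [states] are meaningful (see [edge]). *)
Record aut (L : Type) (S : finType) := Aut {
  states : {set S};
  trans  : S -> L -> S -> bool;
  init   : {set S} }.

Definition edge L S (A : aut L S) (x : S) (a : L) (y : S) : bool :=
  [&& x \in states A, y \in states A & trans A x a y].

Definition init' L S (A : aut L S) : {set S} := init A :&: states A.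

Inductive lpath (X L : Type) (st : X -> L -> X -> Prop) : X -> seq L -> X -> Prop :=
| lp_nil x : lpath st x [::] x
| lp_cons x a y w z : st x a y -> lpath st y w z -> lpath st x (a :: w) z.

Definition reachable (L : finType) S (A : aut L S) : {set S} :=
  [set y | [exists x in init' A, connect (fun u v => [exists a : L, edge A u a v]) x y]].

Definition trim (L : finType) S (A : aut L S) : aut L S :=
  Aut (reachable A) (trans A) (init A).

Definition delete L S (A : aut L S) (P : {set S}) : aut L S :=
  Aut (states A :\: P) (trans A) (init A).

Section NFA.
Variables (Sig : finType) (Q : finType).
Implicit Types (G : aut (option Sig) Q).

Inductive wtr G : Q -> seq Sig -> Q -> Prop :=
| wt_nil x : x \in states G -> wtr G x [::] x
| wt_tau x y s z : edge G x None y -> wtr G y s z -> wtr G x s z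
| wt_sym x y a s z : edge G x (Some a) y -> wtr G y s z -> wtr G x (a :: s) z.

Definition UR G (B : {set Q}) : {set Q} :=
  [set q | [exists b in B, connect (fun x y => edge G x None y) b q]].

Definition post G (X : {set Q}) (s : Sig) : {set Q} :=
  [set y | [exists x in X, edge G x (Some s) y]].

Definition det G : aut Sig {set Q} :=
  trim (Aut [set: {set Q}]
            (fun X s Y => (Y == UR G (post G X s)) && (Y != set0))
            [set UR G (init' G)]).

Definition det_d G (Qs : {set Q}) : aut Sig {set Q} :=
  trim (delete (det G) [set X : {set Q} | X \subset Qs]).
End NFA.

Definition equiv_on S (P : {set S}) (R : rel S) : Prop :=
  [/\ forall x, x \in P -> R x x,
      forall x y, x \in P -> y \in P -> R x y -> R y x &
      forall x y z, x \in P -> y \in P -> z \in P -> R x y -> R y z -> R x z].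

Definition qcls L S (A : aut L S) (R : rel S) (x : S) : {set S} :=
  [set y in states A | R x y].

Definition quot L S (A : aut L S) (R : rel S) : aut L {set S} :=
  Aut [set qcls A R x | x in states A]
      (fun C a D => [exists x in C, exists y in D, edge A x a y])
      [set qcls A R x | x in init' A].

Definition qsecret L S (A : aut L S) (R : rel S) (Qs : {set S}) : {set {set S}} :=
  [set qcls A R x | x in Qs].

Definition opaque_obs_eq (Sig Q : finType) (G : aut (option Sig) Q)
    (Qs : {set Q}) (R : rel Q) : Prop :=
  equiv_on (states G) R /\
  forall x1 x2, x1 \in states G -> x2 \in states G -> R x1 x2 ->
    (forall s y1, wtr G x1 s y1 -> exists y2, R y2 y1 /\ wtr G x2 s y2) /\
    (x1 \in Qs <-> x2 \in Qs).

Definition bisim (Sig S : finType) (A : aut Sig S) (R : rel S) : Prop :=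
  equiv_on (states A) R /\
  forall x1 x2, x1 \in states A -> x2 \in states A -> R x1 x2 ->
    forall a y1, edge A x1 a y1 -> exists y2, R y2 y1 /\ edge A x2 a y2.

Definition opaque_bisim (Sig T : finType) (A : aut Sig {set T})
    (Qs : {set T}) (R : rel {set T}) : Prop :=
  equiv_on (states A) R /\
  forall X1 X2, X1 \in states A -> X2 \in states A -> R X1 X2 ->
    (forall s Y1, lpath (fun x a y => edge A x a y) X1 s Y1 ->
        exists Y2, R Y2 Y1 /\ lpath (fun x a y => edge A x a y) X2 s Y2) /\
    (X1 \subset Qs <-> X2 \subset Qs).

(* labels: symbols of Sig, the fresh symbol epsilon, erasures (s -> epsilon) *)
Inductive tlabel (Sig : Type) := TSym of Sig | TEps | TErase of Sig.
Arguments TEps {Sig}.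

(* Y-states (d,f); Z-states Z((d,f),e); W-states W((d,f),a) with a in
   Sig + Sig^r, encoded as inl e (= e) or inr e (= e -> epsilon) *)
Inductive tstate (Sig SD SF : Type) :=
| TY of SD & SF
| TZ of SD & SF & Sig
| TW of SD & SF & (Sig + Sig).
Arguments TY {Sig SD SF}.
Arguments TZ {Sig SD SF}.
Arguments TW {Sig SD SF}.
Arguments TSym {Sig}.
Arguments TErase {Sig}.

Section TPO.
Variables (Sig : finType) (SD SF : finType) (D : aut Sig SD) (F : aut Sig SF).

Definition defD (d : SD) (e : Sig) := exists d', edge D d e d'.
Definition defF (f : SF) (e : Sig) := exists f', edge F f e f'.

Inductive tpo_step : tstate Sig SD SF -> tlabel Sig -> tstate Sig SD SF -> Prop :=
| tpo1 (d : SD) (f : SF) (e : Sig) : defF f e -> tpo_step (TY d f) (TSym e) (TZ d f e)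
| tpo2 d d' f e th : edge D d th d' -> tpo_step (TZ d f e) (TSym th) (TZ d' f e)
| tpo3 d f e : defD d e -> defF f e -> tpo_step (TZ d f e) TEps (TW d f (inl e))
| tpo4 d f e : defF f e -> tpo_step (TZ d f e) (TErase e) (TW d f (inr e))
| tpo5 d d' f f' e : edge D d e d' -> edge F f e f' ->
    tpo_step (TW d f (inl e)) (TSym e) (TY d' f')
| tpo6 d f f' e : edge F f e f' -> tpo_step (TW d f (inr e)) (TSym e) (TY d f').

Definition tpo_trace (w : seq (tlabel Sig)) : Prop :=
  exists d0 f0, d0 \in init' D /\ f0 \in init' F /\
    exists t, lpath tpo_step (TY d0 f0) w t.
End TPO.

(* Main.v *)
Require Import Defs.
From mathcomp Require Import all_boot.
Set Implicit Arguments. Unset Strict Implicit. Unset Printing Implicit Defensive.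


Notation epath A := (lpath (fun x a y => edge A x a y)).

Definition lang L S (A : aut L S) (s : seq L) : Prop :=
  exists x0, x0 \in init' A /\ exists y, epath A x0 s y.

Definition bisim2 L S1 S2 (A : aut L S1) (B : aut L S2) (R : S1 -> S2 -> Prop) :=
  [/\ forall x, x \in init' A -> exists y, y \in init' B /\ R x y,
      forall y, y \in init' B -> exists x, x \in init' A /\ R x y,
      forall x y a x', R x y -> edge A x a x' -> exists y', edge B y a y' /\ R x' y' &
      forall x y a y', R x y -> edge B y a y' -> exists x', edge A x a x' /\ R x' y'].

Section Gen.
Variable L : Type.

Lemma bisim2_lang S1 S2 (A : aut L S1) (B : aut L S2) R s :
  bisim2 A B R -> lang A s -> lang B s.
Proof.
case=> hi1 _ hf _ [x0 [hx0 [y hp]]].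
have [y0 [hy0 hr]] := hi1 _ hx0.
exists y0; split=> //; clear hy0 hx0.
elim: hp y0 hr => [x|x a x' w z he hp IH] y0 hr.
  by exists y0; constructor.
have [y' [he' hr']] := hf _ _ _ _ hr he.
have [z' hz'] := IH _ hr'.
by exists z'; econstructor; eauto.
Qed.

Lemma bisim2_conv S1 S2 (A : aut L S1) (B : aut L S2) R :
  bisim2 A B R -> bisim2 B A (fun y x => R x y).
Proof. by case=> h1 h2 h3 h4; split; [exact h2|exact h1|move=> x y a x' hr he; exact: h4 hr he|move=> x y a y' hr he; exact: h3 hr he]. Qed.

Lemma bisim2_comp S1 S2 S3 (A : aut L S1) (B : aut L S2) (C : aut L S3) R1 R2 :
  bisim2 A B R1 -> bisim2 B C R2 -> bisim2 A C (fun x z => exists y, R1 x y /\ R2 y z).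
Proof.
case=> a1 a2 a3 a4 [b1 b2 b3 b4]; split.
- move=> x /a1 [y [/b1 [z [hz h2]] h1]]; exists z; split=> //; by exists y.
- move=> z /b2 [y [/a2 [x [hx h1]] h2]]; exists x; split=> //; by exists y.
- move=> x z a x' [y [h1 h2]] he.
  have [y' [he' h1']] := a3 _ _ _ _ h1 he.
  have [z' [he'' h2']] := b3 _ _ _ _ h2 he'.
  exists z'; split=> //; by exists y'.
- move=> x z a z' [y [h1 h2]] he.
  have [y' [he' h2']] := b4 _ _ _ _ h2 he.
  have [x' [he'' h1']] := a4 _ _ _ _ h1 he'.
  exists x'; split=> //; by exists y'.
Qed.

Definition det_aut S (A : aut L S) :=
  (forall x y, x \in init' A -> y \in init' A -> x = y) /\
  (forall x a y z, edge A x a y -> edge A x a z -> y = z).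

Lemma det_sub S (A B : aut L S) :
  states B \subset states A -> trans B = trans A -> init B = init A ->
  det_aut A -> det_aut B.
Proof.
move=> hs ht hi [d1 d2].
have hE x a y : edge B x a y -> edge A x a y.
  by rewrite /edge ht => /and3P [hx hy ->]; rewrite !(subsetP hs).
have hI x : x \in init' B -> x \in init' A.
  by rewrite /init' hi !inE => /andP [-> /(subsetP hs) ->].
split; first by move=> x y /hI hx /hI hy; apply: d1.
by move=> x a y z /hE h1 /hE h2; apply: d2 h1 h2.
Qed.

Lemma bisim2_delete S1 S2 (A : aut L S1) (B : aut L S2) R (P1 : {set S1}) (P2 : {set S2}) :
  bisim2 A B R ->
  (forall x y, R x y -> x \in states A -> y \in states B -> (x \in P1 <-> y \in P2)) ->
  bisim2 (delete A P1) (delete B P2) R.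
Proof.
case=> a1 a2 a3 a4 hc; split.
- move=> x; rewrite /init' /= !inE => /and3P [hi hP hs].
  have hx : x \in init' A by rewrite !inE hi hs.
  have [y [hy hr]] := a1 x hx.
  move: hy; rewrite !inE => /andP [hy1 hy2].
  exists y; split=> //; rewrite /init' /= !inE hy1 hy2 andbT /=.
  apply/negP => /(hc _ _ hr hs hy2) hx'; by rewrite hx' in hP.
- move=> y; rewrite /init' /= !inE => /and3P [hi hP hs].
  have hy : y \in init' B by rewrite !inE hi hs.
  have [x [hx hr]] := a2 y hy.
  move: hx; rewrite !inE => /andP [hx1 hx2].
  exists x; split=> //; rewrite /init' /= !inE hx1 hx2 andbT /=.
  apply/negP => /(hc _ _ hr hx2 hs) hy'; by rewrite hy' in hP.
- move=> x y a x'; rewrite /edge /= !inE => hr /and3P [/andP [hx1 hx2] /andP [hx1' hx2'] ht].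
  have he0 : edge A x a x' by rewrite /edge hx2 hx2' ht.
  have [y' [he hr']] := a3 x y a x' hr he0.
  move: (he); rewrite /edge => /and3P [hy hy' ht'].
  exists y'; rewrite /edge /= !inE hy hy' ht' /= !andbT; split=> //.
  apply/andP; split; apply/negP.
    by move/(hc _ _ hr hx2 hy) => h; rewrite h in hx1.
  by move/(hc _ _ hr' hx2' hy') => h; rewrite h in hx1'.
- move=> x y a y'; rewrite /edge /= !inE => hr /and3P [/andP [hy1 hy2] /andP [hy1' hy2'] ht].
  have he0 : edge B y a y' by rewrite /edge hy2 hy2' ht.
  have [x' [he hr']] := a4 x y a y' hr he0.
  move: (he); rewrite /edge => /and3P [hx hx' ht'].
  exists x'; rewrite /edge /= !inE hx hx' ht' /= !andbT; split=> //.
  apply/andP; split; apply/negP.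
    by move/(hc _ _ hr hx hy2) => h; rewrite h in hy1.
  by move/(hc _ _ hr' hx' hy2') => h; rewrite h in hy1'.
Qed.
End Gen.


Section Trim.
Variables (L : finType) (S : finType) (A : aut L S).
Let e := (fun u v => [exists a : L, edge A u a v]).

Lemma path_states p x : x \in states A -> path e x p -> last x p \in states A.
Proof.
elim: p x => [|z p IH] x //= hx /andP [/existsP [a /and3P [_ hz _]] hp].
exact: IH hp.
Qed.

Lemma reachable_sub : reachable A \subset states A.
Proof.
apply/subsetP => y; rewrite inE => /exists_inP [x hx /connectP [p hp ->]].
apply: path_states hp; by move: hx; rewrite inE => /andP [].
Qed.

Lemma reach_edge x a y : x \in reachable A -> edge A x a y -> y \in reachable A.
Proof.
rewrite !inE => /exists_inP [x0 h0 hc] he; apply/exists_inP; exists x0 => //.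
apply: connect_trans hc (connect1 _); apply/existsP; by exists a.
Qed.

Lemma init_reach x : x \in init' A -> x \in reachable A.
Proof. by move=> hx; rewrite inE; apply/exists_inP; exists x => //; exact: connect0. Qed.

Lemma bisim2_trim : bisim2 (trim A) A (fun x y => x = y /\ x \in reachable A).
Proof.
split.
- move=> x; rewrite /init' /= in_setI => /andP [hi hr]; exists x; split; last by [].
  by rewrite in_setI hi (subsetP reachable_sub _ hr).
- move=> y hy; exists y; split; last by split=> //; exact: init_reach.
  move: (hy); rewrite /init' /= !in_setI => /andP [-> _] /=; exact: init_reach.
- move=> x y a x' [<- hr]; rewrite /edge /= => /and3P [h1 h2 h3].
  exists x'; split=> //; by rewrite /edge h3 !(subsetP reachable_sub).
- move=> x y a y' [<- hr] he; exists y'; split; last by split=> //; apply: reach_edge he.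
  move: (he); rewrite /edge /= => /and3P [_ _ ->]; by rewrite hr (reach_edge hr he).
Qed.

Lemma det_trim : det_aut A -> det_aut (trim A).
Proof. by apply: det_sub => //=; exact: reachable_sub. Qed.

Lemma det_delete P : det_aut A -> det_aut (delete A P).
Proof. by apply: det_sub => //=; exact: subsetDl. Qed.
End Trim.

Section Quot.
Variables (L : finType) (S : finType) (A : aut L S) (R : rel S).
Hypothesis HR : bisim A R.

Lemma Rrefl x : x \in states A -> R x x.
Proof. by case: HR => [[h _ _] _]; apply: h. Qed.
Lemma Rsym x y : x \in states A -> y \in states A -> R x y -> R y x.
Proof. by case: HR => [[_ h _] _]; apply: h. Qed.
Lemma Rtrans x y z : x \in states A -> y \in states A -> z \in states A -> R x y -> R y z -> R x z.
Proof. by case: HR => [[_ _ h] _]; apply: h. Qed.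

Lemma qclsP x y : (y \in qcls A R x) = (y \in states A) && R x y.
Proof. by rewrite inE. Qed.

Lemma qcls_eq x y : x \in states A -> y \in states A -> R x y -> qcls A R x = qcls A R y.
Proof.
move=> hx hy hr; apply/setP => z; rewrite !qclsP.
case hz: (z \in states A) => //=; apply/idP/idP => h.
  exact: (Rtrans hy hx hz (Rsym hx hy hr) h).
exact: (Rtrans hx hy hz hr h).
Qed.

Lemma qstates C : C \in states (quot A R) -> exists2 x, x \in states A & C = qcls A R x.
Proof. by move/imsetP. Qed.

Lemma bisim2_quot : bisim2 A (quot A R) (fun x C => x \in states A /\ C = qcls A R x).
Proof.
have hs x : x \in states A -> qcls A R x \in states (quot A R) by move=> hx; apply: imset_f.
split.
- move=> x hx; exists (qcls A R x); split; last by move: hx; rewrite inE => /andP [].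
  move: (hx); rewrite inE => /andP [_ hx2]; rewrite inE hs // andbT; exact: imset_f.
- move=> C; rewrite inE => /andP [/imsetP [x hx ->] _]; exists x; split=> //.
  by move: hx; rewrite inE => /andP [].
- move=> x C a x' [hx ->] he; exists (qcls A R x'); move: (he) => /and3P [_ hx' _].
  split=> //; rewrite /edge /= hs // hs //=.
  apply/exists_inP; exists x; first by rewrite qclsP hx Rrefl.
  apply/exists_inP; exists x' => //; by rewrite qclsP hx' Rrefl.
- move=> x C a C' [hx ->] /and3P [_ /qstates [z hz ->] /exists_inP [x1 hx1 /exists_inP [y1 hy1 he]]].
  move: hx1 hy1; rewrite !qclsP => /andP [hx1 r1] /andP [hy1 r2].
  have [y2 [ry hy2]] := HR.2 x1 x hx1 hx (Rsym hx hx1 r1) a y1 he.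
  move: (hy2) => /and3P [_ hy2s _].
  exists y2; split=> //; split=> //; apply: qcls_eq => //.
  exact: (Rtrans hz hy1 hy2s r2 (Rsym hy2s hy1 ry)).
Qed.

Lemma det_quot : det_aut A -> det_aut (quot A R).
Proof.
move=> [d1 d2]; split.
- move=> C1 C2; rewrite !inE => /andP [/imsetP [x1 h1 ->] _] /andP [/imsetP [x2 h2 ->] _].
  by rewrite (d1 _ _ h1 h2).
- move=> C a C1 C2 /and3P [/qstates [z hz ->] /qstates [z1 hz1 ->] /exists_inP [x1 hx1 /exists_inP [y1 hy1 he1]]].
  move=> /and3P [_ /qstates [z2 hz2 ->] /exists_inP [x2 hx2 /exists_inP [y2 hy2 he2]]].
  move: hx1 hy1 hx2 hy2; rewrite !qclsP => /andP [sx1 r1] /andP [sy1 r2] /andP [sx2 r3] /andP [sy2 r4].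
  have [y [ry hy]] := HR.2 x1 x2 sx1 sx2 (Rtrans sx1 hz sx2 (Rsym hz sx1 r1) r3) a y1 he1.
  have ey := d2 _ _ _ _ hy he2; subst y.
  apply: qcls_eq => //.
  exact: (Rtrans hz1 sy1 hz2 r2 (Rtrans sy1 sy2 hz2 (Rsym sy2 sy1 ry) (Rsym hz2 sy2 r4))).
Qed.
End Quot.

Lemma obisim_bisim (Sig T : finType) (A : aut Sig {set T}) Qs R :
  opaque_bisim A Qs R -> bisim A R.
Proof.
case=> he h; split=> // x1 x2 h1 h2 r a y1 e1.
have [Y2 [rY hp]] := (h x1 x2 h1 h2 r).1 [:: a] y1 (lp_cons e1 (lp_nil _ _)).
exists Y2; split=> //; inversion hp; subst; inversion H4; subst; done.
Qed.


Lemma lpath_nilE (X L : Type) (st : X -> L -> X -> Prop) x z : lpath st x [::] z -> x = z.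
Proof. by move=> h; inversion h. Qed.

Lemma lpath_consE (X L : Type) (st : X -> L -> X -> Prop) x a w z :
  lpath st x (a :: w) z -> exists y, st x a y /\ lpath st y w z.
Proof. by move=> h; inversion h; subst; eauto. Qed.

Section Reach.
Variables (L : Type) (S : finType) (A : aut L S).

Definition reach u d := exists d0, d0 \in init' A /\ epath A d0 u d.

Lemma epath_det : det_aut A -> forall x u y z, epath A x u y -> epath A x u z -> y = z.
Proof.
move=> [_ hd] x u y z hp; elim: hp z => [x0|x0 a y0 w z0 he hp IH] z' hq.
  exact: lpath_nilE hq.
have [y1 [he1 hp1]] := lpath_consE hq.
have ey := hd _ _ _ _ he he1; subst y1.
exact: IH.
Qed.

Lemma epath_rcons x u y a z : epath A x u y -> edge A y a z -> epath A x (rcons u a) z.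
Proof.
elim=> [x0|x0 b y0 w z0 he hp IH] hz /=.
  by econstructor; [exact hz | constructor].
by econstructor; [exact he | exact: IH].
Qed.

Lemma epath_rconsP x u a z : epath A x (rcons u a) z -> exists y, epath A x u y /\ edge A y a z.
Proof.
elim: u x => [|b u IH] x /= hp.
  have [y1 [he1 hp1]] := lpath_consE hp.
  have e := lpath_nilE hp1; subst y1; exists x; split=> //; constructor.
have [y1 [he1 hp1]] := lpath_consE hp.
have [m [hm he]] := IH _ hp1.
by exists m; split=> //; econstructor; eauto.
Qed.

Lemma reach_det u d1 d2 : det_aut A -> reach u d1 -> reach u d2 -> d1 = d2.
Proof.
move=> hd [x0 [h0 p0]] [y0 [h1 p1]].
have e := hd.1 _ _ h0 h1; subst y0.
exact: epath_det p0 p1.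
Qed.
End Reach.

Section RelW.
Variables (L : Type) (S1 S2 : finType) (D1 : aut L S1) (D2 : aut L S2).
Definition RelW d1 d2 := exists u, reach D1 u d1 /\ reach D2 u d2.

Lemma det_step : det_aut D2 -> (forall s, lang D1 s -> lang D2 s) ->
  forall d1 d2 a d1', RelW d1 d2 -> edge D1 d1 a d1' ->
  exists d2', edge D2 d2 a d2' /\ RelW d1' d2'.
Proof.
move=> hd hl d1 d2 a d1' [u [[x0 [hx0 hp1]] [y0 [hy0 hp2]]]] he.
have : lang D1 (rcons u a).
  by exists x0; split=> //; exists d1'; apply: epath_rcons hp1 he.
move/hl => [y1 [hy1 [z hz]]].
have [m [hm hem]] := epath_rconsP hz.
have e1 := hd.1 _ _ hy0 hy1; subst y1.
have e2 := epath_det hd hm hp2; subst m.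
exists z; split=> //; exists (rcons u a); split.
  by exists x0; split=> //; apply: epath_rcons hp1 he.
by exists y0; split.
Qed.
End RelW.

Section TPOsim.
Variables (Sig : finType) (SD1 SF1 SD2 SF2 : finType).
Variables (D1 : aut Sig SD1) (F1 : aut Sig SF1) (D2 : aut Sig SD2) (F2 : aut Sig SF2).
Hypotheses (hD : det_aut D2) (hF : det_aut F2).
Hypotheses (lD : forall s, lang D1 s -> lang D2 s) (lF : forall s, lang F1 s -> lang F2 s).

Definition trel (t1 : tstate Sig SD1 SF1) (t2 : tstate Sig SD2 SF2) : Prop :=
  match t1, t2 with
  | TY d1 f1, TY d2 f2 => RelW D1 D2 d1 d2 /\ RelW F1 F2 f1 f2
  | TZ d1 f1 e1, TZ d2 f2 e2 => [/\ RelW D1 D2 d1 d2, RelW F1 F2 f1 f2 & e1 = e2]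
  | TW d1 f1 a1, TW d2 f2 a2 => [/\ RelW D1 D2 d1 d2, RelW F1 F2 f1 f2 & a1 = a2]
  | _, _ => False
  end.

Lemma tpo_sim t1 l t1' t2 : trel t1 t2 -> tpo_step D1 F1 t1 l t1' ->
  exists t2', tpo_step D2 F2 t2 l t2' /\ trel t1' t2'.
Proof.
move=> hr hs; case: hs hr.
- move=> d f e [f' hf]; case: t2 => //= d2 f2 [rd rf].
  have [f2' [he _]] := det_step hF lF rf hf.
  exists (TZ d2 f2 e); split; first by apply: tpo1; exists f2'.
  by split.
- move=> d d' f e th he; case: t2 => //= d2 f2 e2 [rd rf <-].
  have [d2' [he' rd']] := det_step hD lD rd he.
  exists (TZ d2' f2 e); split; first exact: tpo2.
  by split.
- move=> d f e [d' hd'] [f' hf']; case: t2 => //= d2 f2 e2 [rd rf <-].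
  have [d2' [he1 _]] := det_step hD lD rd hd'.
  have [f2' [he2 _]] := det_step hF lF rf hf'.
  exists (TW d2 f2 (inl e)); split; first by apply: tpo3; [exists d2' | exists f2'].
  by split.
- move=> d f e [f' hf']; case: t2 => //= d2 f2 e2 [rd rf <-].
  have [f2' [he2 _]] := det_step hF lF rf hf'.
  exists (TW d2 f2 (inr e)); split; first by apply: tpo4; exists f2'.
  by split.
- move=> d d' f f' e hd' hf'; case: t2 => //= d2 f2 a2 [rd rf <-].
  have [d2' [he1 rd']] := det_step hD lD rd hd'.
  have [f2' [he2 rf']] := det_step hF lF rf hf'.
  exists (TY d2' f2'); split; first exact: tpo5.
  by split.
- move=> d f f' e hf'; case: t2 => //= d2 f2 a2 [rd rf <-].
  have [f2' [he2 rf']] := det_step hF lF rf hf'.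
  exists (TY d2 f2'); split; first exact: tpo6.
  by split.
Qed.

Lemma tpo_trace_sim w : tpo_trace D1 F1 w -> tpo_trace D2 F2 w.
Proof.
move=> [d0 [f0 [hd0 [hf0 [t hp]]]]].
have [d0' [hd0' _]] : lang D2 [::] by apply: lD; exists d0; split=> //; exists d0; constructor.
have [f0' [hf0' _]] : lang F2 [::] by apply: lF; exists f0; split=> //; exists f0; constructor.
exists d0', f0'; split=> //; split=> //.
have hr : trel (TY d0 f0) (TY d0' f0').
  split; exists [::]; split.
  - by exists d0; split=> //; constructor.
  - by exists d0'; split=> //; constructor.
  - by exists f0; split=> //; constructor.
  - by exists f0'; split=> //; constructor.
elim: hp (TY d0' f0') hr => [x|x a y w' z hs hp IH] t2 hr.
  by exists t2; constructor.
have [t2' [hs' hr']] := tpo_sim hr hs.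
have [z' hz'] := IH _ hr'.
by exists z'; econstructor; eauto.
Qed.
End TPOsim.


Definition Bdet (Sig T : finType) (H : aut (option Sig) T) : aut Sig {set T} :=
  Aut [set: {set T}] (fun X s Y => (Y == UR H (post H X s)) && (Y != set0)) [set UR H (init' H)].

Lemma det_Bdet (Sig T : finType) (H : aut (option Sig) T) : det_aut (Bdet H).
Proof.
split.
  by move=> x y; rewrite !in_setI !in_set1 => /andP [/eqP -> _] /andP [/eqP -> _].
by move=> x a y z /and3P [_ _ /andP [/eqP -> _]] /and3P [_ _ /andP [/eqP -> _]].
Qed.

Lemma edge_Bdet (Sig T : finType) (H : aut (option Sig) T) X a Y :
  edge (Bdet H) X a Y = (Y == UR H (post H X a)) && (Y != set0).
Proof. by rewrite /edge /= !in_setT. Qed.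

Lemma det_det (Sig T : finType) (H : aut (option Sig) T) : det_aut (det H).
Proof. exact: (det_trim (det_Bdet H)). Qed.

Lemma wtr_conn (Sig T : finType) (H : aut (option Sig) T) x s y : wtr H x s y ->
  (s = [::] -> connect (fun x y => edge H x None y) x y) /\
  (forall a, s = [:: a] -> exists m n, [/\ connect (fun x y => edge H x None y) x m,
      edge H m (Some a) n & connect (fun x y => edge H x None y) n y]).
Proof.
elim=> [x0 hx|x0 y0 s0 z0 he hw [IH1 IH2]|x0 y0 a0 s0 z0 he hw [IH1 IH2]].
- by split=> // a.
- split.
    by move=> e; apply: connect_trans _ (IH1 e); apply: connect1.
  move=> a e; have [m [n [h1 h2 h3]]] := IH2 a e.
  by exists m, n; split=> //; apply: connect_trans _ h1; apply: connect1.
- split=> // a [e1 e2]; subst.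
  by exists x0, y0; split; [exact: connect0 | exact: he | exact: IH1].
Qed.

Section GQ.
Variables (Sig Q : finType) (G : aut (option Sig) Q) (Qs : {set Q}) (simo : rel Q).
Hypothesis HQ : states G = [set: Q].
Hypothesis Hsimo : opaque_obs_eq G Qs simo.
Notation Gq := (quot G simo).
Notation qc := (qcls G simo).

Lemma sT x : x \in states G. Proof. by rewrite HQ inE. Qed.
Lemma srefl x : simo x x. Proof. by case: Hsimo => [[h _ _] _]; apply: h; exact: sT. Qed.
Lemma ssym x y : simo x y -> simo y x. Proof. by case: Hsimo => [[_ h _] _]; apply: h; exact: sT. Qed.
Lemma strans x y z : simo x y -> simo y z -> simo x z.
Proof. by case: Hsimo => [[_ _ h] _]; apply: h; exact: sT. Qed.
Lemma qP x y : (y \in qc x) = simo x y. Proof. by rewrite inE sT. Qed.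
Lemma qeq x y : simo x y -> qc x = qc y.
Proof.
move=> h; apply/setP => z; rewrite !qP; apply/idP/idP => h2.
  exact: strans (ssym h) h2.
exact: strans h h2.
Qed.
Lemma qinv x y : qc x = qc y -> simo x y.
Proof. by move=> e; have := srefl y; rewrite -qP -e qP. Qed.
Lemma transfer x1 x2 s y1 : simo x1 x2 -> wtr G x1 s y1 -> exists y2, simo y2 y1 /\ wtr G x2 s y2.
Proof. by move=> h; apply: (Hsimo.2 x1 x2 (sT _) (sT _) h).1. Qed.
Lemma secr x1 x2 : simo x1 x2 -> (x1 \in Qs <-> x2 \in Qs).
Proof. by move=> h; apply: (Hsimo.2 x1 x2 (sT _) (sT _) h).2. Qed.

Lemma qstate x : qc x \in states Gq. Proof. exact: imset_f (sT x). Qed.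
Lemma qstatesG C : C \in states Gq -> exists x, C = qc x.
Proof. by case/imsetP=> x _ ->; exists x. Qed.

Lemma edge_lift x l y : edge G x l y -> edge Gq (qc x) l (qc y).
Proof.
move=> he; rewrite /edge /= !qstate /=.
apply/exists_inP; exists x; first by rewrite qP srefl.
apply/exists_inP; exists y => //; by rewrite qP srefl.
Qed.

Lemma conn_lift x y : connect (fun x y => edge G x None y) x y ->
  connect (fun C D => edge Gq C None D) (qc x) (qc y).
Proof.
case/connectP=> p hp ->; elim: p x hp => [|z p IH] x /=; first by move=> _; exact: connect0.
case/andP=> he hp; apply: connect_trans _ (IH _ hp); apply: connect1; exact: edge_lift.
Qed.

Definition lw (l : option Sig) := if l is Some a then [:: a] else [::].

Lemma edgeq_lower x l D : edge Gq (qc x) l D -> exists y, D = qc y /\ wtr G x (lw l) y.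
Proof.
case/and3P=> _ /qstatesG [z ->] /exists_inP [x' hx' /exists_inP [y' hy' he]].
rewrite qP in hx'; rewrite qP in hy'.
have hw : wtr G x' (lw l) y'.
  case: l he => [a|] he /=.
    by apply: wt_sym he _; apply: wt_nil (sT _).
  by apply: wt_tau he _; apply: wt_nil (sT _).
have [y2 [r hw2]] := transfer (ssym hx') hw.
exists y2; split=> //; apply: qeq; exact: strans hy' (ssym r).
Qed.

Lemma L1 x D : connect (fun C D => edge Gq C None D) (qc x) D ->
  exists y, D = qc y /\ connect (fun x y => edge G x None y) x y.
Proof.
case/connectP=> p hp ->; elim: p x hp => [|C p IH] x /=.
  by move=> _; exists x; split=> //; exact: connect0.
case/andP=> he hp.
have [y2 [e hw]] := edgeq_lower he; subst C.
have [y [-> hc]] := IH _ hp.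
exists y; split=> //; apply: connect_trans _ hc.
exact: (wtr_conn hw).1.
Qed.

Lemma L2 x a D : edge Gq (qc x) (Some a) D -> exists y, D = qc y /\
  exists m n, [/\ connect (fun x y => edge G x None y) x m,
      edge G m (Some a) n & connect (fun x y => edge G x None y) n y].
Proof.
move/edgeq_lower=> [y [-> hw]]; exists y; split=> //; exact: (wtr_conn hw).2 a erefl.
Qed.

Definition tauclosed (X : {set Q}) :=
  forall x y, x \in X -> connect (fun x y => edge G x None y) x y -> y \in X.

Lemma tauclosed_UR B : tauclosed (UR G B).
Proof.
move=> x y; rewrite !inE => /exists_inP [b hb hc] hc'; apply/exists_inP; exists b => //.
exact: connect_trans hc hc'.
Qed.

Lemma img_step X a : tauclosed X -> qc @: UR G (post G X a) = UR Gq (post Gq (qc @: X) a).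
Proof.
move=> hX; apply/setP => D; apply/imsetP/idP.
  case=> q; rewrite inE => /exists_inP [y hy hc] ->.
  move: hy; rewrite inE => /exists_inP [x hx he].
  rewrite inE; apply/exists_inP; exists (qc y); last exact: conn_lift.
  rewrite inE; apply/exists_inP; exists (qc x); first exact: imset_f.
  exact: edge_lift.
rewrite inE => /exists_inP [E hE hc].
move: hE; rewrite inE => /exists_inP [C /imsetP [x hx eC] he]; subst C.
have [y [eE [m [n [h1 h2 h3]]]]] := L2 he; subst E.
have [q [eD hq]] := L1 hc; subst D.
exists q => //; rewrite inE; apply/exists_inP; exists n; last exact: connect_trans h3 hq.
rewrite inE; apply/exists_inP; exists m => //; exact: hX h1.
Qed.

Lemma img_init : qc @: UR G (init' G) = UR Gq (init' Gq).
Proof.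
apply/setP => D; apply/imsetP/idP.
  case=> q; rewrite inE => /exists_inP [x0 hx0 hc] ->.
  rewrite inE; apply/exists_inP; exists (qc x0); last exact: conn_lift.
  by rewrite /init' in_setI /= qstate andbT; apply: imset_f.
rewrite inE => /exists_inP [C hC hc].
move: hC; rewrite /init' in_setI /= => /andP [/imsetP [x0 hx0 eC] _]; subst C.
have [q [eD hq]] := L1 hc; subst D.
exists q => //; rewrite inE; apply/exists_inP; by exists x0.
Qed.

Definition Rimg (X : {set Q}) (Y : {set {set Q}}) := Y = qc @: X /\ tauclosed X.

Lemma bisim2_B : bisim2 (Bdet G) (Bdet Gq) Rimg.
Proof.
split.
- move=> x; rewrite in_setI in_set1 => /andP [/eqP -> _].
  exists (UR Gq (init' Gq)); split; first by rewrite in_setI in_set1 eqxx in_setT.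
  split; [by rewrite img_init | exact: tauclosed_UR].
- move=> y; rewrite in_setI in_set1 => /andP [/eqP -> _].
  exists (UR G (init' G)); split; first by rewrite in_setI in_set1 eqxx in_setT.
  split; [by rewrite img_init | exact: tauclosed_UR].
- move=> X Y a X' [-> hX] /and3P [_ _ /andP [/eqP -> hne]].
  exists (UR Gq (post Gq (qc @: X) a)); rewrite -img_step //.
  split; last by (split=> //; exact: tauclosed_UR).
  by rewrite edge_Bdet {1}img_step // eqxx /= imset_eq0.
- move=> X Y a Y' [-> hX] /and3P [_ _ /andP [/eqP -> hne]].
  exists (UR G (post G X a)); rewrite -img_step //.
  split; last by (split=> //; exact: tauclosed_UR).
  by rewrite edge_Bdet eqxx /= -(imset_eq0 qc) img_step.
Qed.

Lemma secret_img (X : {set Q}) : X \subset Qs <-> qc @: X \subset qsecret G simo Qs.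
Proof.
split; first by move=> h; apply: imsetS.
move=> h; apply/subsetP => x hx.
have /imsetP [q hq e] := subsetP h _ (imset_f qc hx).
have r : simo q x by apply: qinv; rewrite e.
exact: (secr r).1 hq.
Qed.
End GQ.

Unset Implicit Arguments.


Theorem theorem3 (Sig Q : finType) (G : aut (option Sig) Q) (Qs : {set Q})
  (HQ : states G = [set: Q])
  (Hsec : ~~ (UR G (init G) \subset Qs))
  (simo : rel Q) (Hsimo : opaque_obs_eq G Qs simo)
  (ob : rel {set {set Q}})
  (Hob : opaque_bisim (det (quot G simo)) (qsecret G simo Qs) ob)
  (b : rel {set {set Q}})
  (Hb : bisim (det (quot G simo)) b) :
  let Hob_q := quot (det (quot G simo)) ob in
  let Hb_q := quot (det (quot G simo)) b in
  let Hobd := trim (delete Hob_q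
                 [set C : {set {set {set Q}}} | [exists X in C, X \subset qsecret G simo Qs]]) in
  forall w : seq (tlabel Sig),
    tpo_trace (det_d G Qs) (det G) w <-> tpo_trace Hobd Hb_q w.
Proof.
move=> Hob_q Hb_q Hobd w.
have hRd := bisim2_comp (bisim2_trim (Bdet G))
   (bisim2_comp (bisim2_B HQ Hsimo) (bisim2_conv (bisim2_trim (Bdet (quot G simo))))).
have hb := bisim2_comp hRd (bisim2_quot Hb).
have hobb := obisim_bisim Hob.
have hdel0 := bisim2_delete (P1 := [set X : {set Q} | X \subset Qs])
   (P2 := [set C : {set {set {set Q}}} | [exists X in C, X \subset qsecret G simo Qs]])
   (bisim2_comp hRd (bisim2_quot hobb)).
lazymatch type of hdel0 with ?H -> _ => have hc : H end.
  move=> X C [Y [[X1 [[<- _] [Y1 [[-> hX] [-> _]]]]] [hY ->]]] _ _.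
  rewrite !inE; split.
    move=> h; apply/exists_inP; exists (qcls G simo @: X).
      by rewrite inE hY; case: Hob => [[hr _ _] _]; rewrite hr.
    exact: (secret_img HQ Hsimo X).1 h.
  case/exists_inP=> Z; rewrite inE => /andP [hZ hr] hZs.
  apply: (secret_img HQ Hsimo X).2.
  exact: ((Hob.2 _ _ hY hZ hr).2).2 hZs.
have hdel := hdel0 hc.
have hd := bisim2_comp (bisim2_trim _) (bisim2_comp hdel (bisim2_conv (bisim2_trim _))).
have dG := det_det G.
have dGq := det_det (quot G simo).
have dGd : det_aut (det_d G Qs) by apply: det_trim; apply: det_delete.
have dHb : det_aut Hb_q by apply: det_quot.
have dHobd : det_aut Hobd by apply: det_trim; apply: det_delete; apply: det_quot.
split.
  apply: tpo_trace_sim => //.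
    by move=> s; apply: bisim2_lang hd.
  by move=> s; apply: bisim2_lang hb.
apply: tpo_trace_sim => //.
  by move=> s; apply: bisim2_lang (bisim2_conv hd).
by move=> s; apply: bisim2_lang (bisim2_conv hb).
Qed.
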